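(* Consider the $(1+1)$-dimensional Born-Infeld system with $a=c=1$ for a density $\rho(t,x)>0$ and a momentum $p(t,x)$, $(t,x)\in\mathbb{R}^2$: $$\frac{\partial\rho}{\partial t}=-\frac{\partial}{\partial x}\left(p\frac{\sqrt{\rho^2+1}}{\sqrt{1+p^2}}\right),\qquad \frac{\partial p}{\partial t}=-\frac{\partial}{\partial x}\left(\rho\frac{\sqrt{1+p^2}}{\sqrt{\rho^2+1}}\right),$$ restricted to states satisfying the constraint $p\rho=1$. Assume that the densities $\rho$ under consideration satisfy $0<\gamma:=\inf_{(t,x)\in\mathbb{R}^2}\rho(t,x)$ and $\beta:=\sup_{(t,x)\in\mathbb{R}^2}\rho(t,x)<\infty$. Then the constant state $(p_e,\rho_e)=(1,1)$ is a Lyapunov-stable equilibrium point of this system on the constraint set $p\rho=1$, where stability is measured in the norm $$\|\Delta u\|^2=\int_{\mathbb{R}}\frac{(\Delta\rho)^2}{\beta}\,\mathrm{d}x,\qquad \Delta u=(p-p_e,\rho-\rho_e),\ \Delta\rho=\rho-\rho_e.$$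
   Context: An equilibrium point $u_e$ of an evolution equation $\partial_t u=X(u)$ is a state with $X(u_e)=0$. It is Lyapunov stable with respect to a norm $\|\cdot\|$ if for every $\varepsilon>0$ there is $\sigma>0$ such that every solution $u(t,\cdot)$ with $\|u(t_0,\cdot)-u_e\|<\sigma$ satisfies $\|u(t,\cdot)-u_e\|<\varepsilon$ for all $t\ge t_0$. The system is Hamiltonian with Hamiltonian $H=\int\sqrt{\rho^2c^2+a^2}\sqrt{c^2+p^2}\,\mathrm{d}x$ (here $a=c=1$) and Poisson bracket $\{F,G\}=-\int\left(\frac{\delta F}{\delta\rho}\partial_x\frac{\delta G}{\delta p}+\frac{\delta F}{\delta p}\partial_x\frac{\delta G}{\delta\rho}\right)\mathrm{d}x$. *)

(* Defs.v *)
From HB Require Import structures.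
From mathcomp Require Import all_boot all_order all_algebra.
From mathcomp Require Import all_classical all_reals all_analysis.
Set Implicit Arguments. Unset Strict Implicit. Unset Printing Implicit Defensive.
Import Order.TTheory GRing.Theory Num.Theory.
Import numFieldNormedType.Exports.
Local Open Scope classical_set_scope.
Local Open Scope ring_scope.

Section BornInfeld.
Variable R : realType.

Definition bi_flux_rho (r q : R) : R :=
  q * Num.sqrt (r ^+ 2 + 1) / Num.sqrt (1 + q ^+ 2).

Definition bi_flux_p (r q : R) : R :=
  r * Num.sqrt (1 + q ^+ 2) / Num.sqrt (r ^+ 2 + 1).

Definition BI_solution (rho p : R -> R -> R) : Prop :=
  forall t x : R,
    derivable (fun s => rho s x) t 1 /\
        derivable (fun s => p s x) t 1 /\
        derivable (fun y => bi_flux_rho (rho t y) (p t y)) x 1 /\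
        derivable (fun y => bi_flux_p (rho t y) (p t y)) x 1 /\
        derive1 (fun s => rho s x) t
          = - derive1 (fun y => bi_flux_rho (rho t y) (p t y)) x
      /\ derive1 (fun s => p s x) t
          = - derive1 (fun y => bi_flux_p (rho t y) (p t y)) x.

Definition on_constraint (rho p : R -> R -> R) : Prop :=
  forall t x : R, p t x * rho t x = 1.

Definition rho_values (rho : R -> R -> R) : set R :=
  range (fun tx : R * R => rho tx.1 tx.2).

Definition dev_normsq (beta rho_e : R) (r : R -> R) : \bar R :=
  (\int[@lebesgue_measure R]_(x in [set: R]) (((r x - rho_e) ^+ 2 / beta)%:E))%E.

End BornInfeld.

(* Main.v *)
Require Import Defs.
From HB Require Import structures.
From mathcomp Require Import all_boot all_order all_algebra.
From mathcomp Require Import all_classical all_reals all_analysis.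
From mathcomp Require Import ring lra.
Import Order.TTheory GRing.Theory Num.Theory.
Local Open Scope classical_set_scope.
Local Open Scope ring_scope.

Lemma flux_key (R : realType) (r q : R) : 0 < r -> q * r = 1 ->
  Num.sqrt (1 + q ^+ 2) = Num.sqrt (r ^+ 2 + 1) * q /\ 0 < q.
Proof.
move=> r0 qr.
have q0 : 0 < q.
  have : 0 < q * r by rewrite qr.
  by rewrite pmulr_lgt0.
split=> //.
have -> : 1 + q ^+ 2 = (r ^+ 2 + 1) * q ^+ 2.
  have e : (r ^+ 2 + 1) * q ^+ 2 = (q * r) ^+ 2 + q ^+ 2 by ring.
  by rewrite e qr expr1n.
by rewrite sqrtrM ?sqrtr_sqr ?gtr0_norm // addr_ge0 // sqr_ge0.
Qed.

Lemma flux_rho1 (R : realType) (r q : R) : 0 < r -> q * r = 1 ->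
  bi_flux_rho r q = 1.
Proof.
move=> r0 qr; rewrite /bi_flux_rho /bi_flux_p; have [-> q0] := (@flux_key _ r q r0 qr).
have S0 : 0 < Num.sqrt (r ^+ 2 + 1) by rewrite sqrtr_gt0 ltr_wpDl // sqr_ge0.
rewrite [q * _]mulrC [_ * q]mulrC divff //.
by rewrite mulf_neq0 // gt_eqF.
Qed.

Lemma flux_p1 (R : realType) (r q : R) : 0 < r -> q * r = 1 ->
  bi_flux_p r q = 1.
Proof.
move=> r0 qr; rewrite /bi_flux_rho /bi_flux_p; have [-> q0] := (@flux_key _ r q r0 qr).
have S0 : 0 < Num.sqrt (r ^+ 2 + 1) by rewrite sqrtr_gt0 ltr_wpDl // sqr_ge0.
rewrite -[RHS]qr; field; rewrite ?gt_eqF // ?mulf_neq0 // ?gt_eqF //.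
Qed.

Lemma rho_const (R : realType) (rho p : R -> R -> R) :
  BI_solution rho p -> on_constraint rho p -> (forall t x, 0 < rho t x) ->
  forall t t' x, rho t x = rho t' x.
Proof.
move=> sol con pos t t' x.
apply: (@is_derive_0_is_cst _ (fun s => rho s x)) => s.
have [d [_ [_ [_ [e _]]]]] := sol s x.
have hf : (fun y => bi_flux_rho (rho s y) (p s y)) = cst 1.
  by apply/funext => y; rewrite flux_rho1.
rewrite hf derive1_cst oppr0 derive1E in e.
by rewrite -e; apply: derivableP.
Qed.

Theorem mainTheorem2 (R : realType) :
  (BI_solution (fun _ _ : R => 1) (fun _ _ : R => 1) /\
   on_constraint (fun _ _ : R => 1) (fun _ _ : R => 1)) /\
  forall eps : R, 0 < eps ->
  exists sigma : R, 0 < sigma /\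
  forall (rho p : R -> R -> R) (t0 : R),
    BI_solution rho p ->
    on_constraint rho p ->
    (forall t x, 0 < rho t x) ->
    has_lbound (rho_values rho) ->
    0 < inf (rho_values rho) ->
    has_ubound (rho_values rho) ->
    (dev_normsq (sup (rho_values rho)) 1 (rho t0) < (sigma ^+ 2)%:E)%E ->
    forall t, t0 <= t ->
      (dev_normsq (sup (rho_values rho)) 1 (rho t) < (eps ^+ 2)%:E)%E.
Proof.
split.
  split; last by move=> t x; rewrite mulr1.
  move=> t x.
  have h1 : (fun y : R => bi_flux_rho (1:R) 1) = cst 1.
    by apply/funext => y; rewrite flux_rho1 // mulr1.
  have h2 : (fun y : R => bi_flux_p (1:R) 1) = cst 1.
    by apply/funext => y; rewrite flux_p1 // mulr1.
  rewrite h1 h2 !derive1_cst oppr0.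
  have d1 : derivable (fun _ : R => (1:R)) t 1 := derivable_cst (1:R) t 1.
  have d2 : derivable (cst (1:R)) x 1 := derivable_cst (1:R) x 1.
  have e1 : derive1 (fun _ : R => (1:R)) t = 0 := derive1_cst (1:R) t.
  exact: (conj d1 (conj d1 (conj d2 (conj d2 (conj erefl erefl))))).
move=> eps eps0; exists eps; split=> // rho p t0 sol con pos _ _ _ H t _.
have E : rho t = rho t0 := boolp.funext (fun x => @rho_const _ rho p sol con pos t t0 x).
rewrite E; exact: H.
Qed.
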